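(* Let $\beta=(\beta_{ij})_{i,j\ge 0,\ i+j\le 6}$ be a real sequence such that $\mathcal M(3)(\beta)$ is positive semidefinite, $\mathcal M(2)(\beta)$ is positive definite, and $\operatorname{rank}\mathcal M(3)=\operatorname{card}\mathcal V=7$, where $\mathcal V$ is the algebraic variety of $\mathcal M(3)$. Suppose the columns $\mathcal B_2=\{1,X,Y,X^2,XY,Y^2,X^2Y\}$ form a basis of the column space of $\mathcal M(3)$. Then $\beta$ admits a representing measure if and only if $\mathcal M(3)$ is weakly consistent.
   Context: The moment matrix $\mathcal M(3)(\beta)$ has rows and columns indexed by $1,X,Y,X^2,XY,Y^2,X^3,X^2Y,XY^2,Y^3$ in this order, with entry $\beta_{i+k,j+l}$ in row $X^iY^j$ and column $X^kY^l$; $\mathcal M(2)(\beta)$ is its principal submatrix indexed by monomials of degree $\le 2$. For $p(x,y)=\sum a_{ij}x^iy^j$ of degree $\le 3$, $p(X,Y)=\sum a_{ij}X^iY^j$ is the corresponding linear combination of columns. The algebraic variety is $\mathcal V=\bigcap\{\mathcal Z(p):\deg p\le 3,\ p(X,Y)=\mathbf 0\}$ with $\mathcal Z(p)$ the real zero set of $p$. A representing measure is a positive Borel measure $\mu$ on $\mathbb R^2$ with $\beta_{ij}=\int x^iy^j\,d\mu$ for $i+j\le 6$. $\mathcal M(3)$ is weakly consistent if every polynomial $p$ of degree $\le 3$ vanishing on $\mathcal V$ satisfies $p(X,Y)=\mathbf 0$. *)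

(* Defs.v *)
From HB Require Import structures.
From mathcomp Require Import all_boot all_order all_algebra.
From mathcomp Require Import all_classical all_reals all_analysis.
Set Implicit Arguments. Unset Strict Implicit. Unset Printing Implicit Defensive.
Import Order.TTheory GRing.Theory Num.Theory.
Local Open Scope ring_scope.
Local Open Scope classical_set_scope.

(* Exponents (i,j) of the monomials X^i Y^j indexing M(3), in the order
   1, X, Y, X^2, XY, Y^2, X^3, X^2Y, XY^2, Y^3. *)
Definition mono_list : seq (nat * nat) :=
  [:: (0,0); (1,0); (0,1); (2,0); (1,1); (0,2); (3,0); (2,1); (1,2); (0,3)]%N.
Definition mono (k : 'I_10) : nat * nat := nth (0,0)%N mono_list k.

Definition M3 (R : nzRingType) (beta : nat -> nat -> R) : 'M[R]_10 :=
  \matrix_(r < 10, c < 10)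
    beta ((mono r).1 + (mono c).1)%N ((mono r).2 + (mono c).2)%N.

(* M(2)(beta): principal submatrix indexed by the monomials of degree <= 2
   (the first six). *)
Definition M2 (R : nzRingType) (beta : nat -> nat -> R) : 'M[R]_6 :=
  \matrix_(r < 6, c < 6)
    M3 beta (widen_ord (isT : (6 <= 10)%N) r) (widen_ord (isT : (6 <= 10)%N) c).

Definition psd_mx (R : realFieldType) (n : nat) (A : 'M[R]_n) : Prop :=
  A^T = A /\ forall v : 'cV[R]_n, 0 <= (v^T *m A *m v) ord0 ord0.

Definition pd_mx (R : realFieldType) (n : nat) (A : 'M[R]_n) : Prop :=
  A^T = A /\ forall v : 'cV[R]_n, v != 0 -> 0 < (v^T *m A *m v) ord0 ord0.

(* A polynomial of degree <= 3 is given by its coefficient vector a on the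
   10 monomials; p(x,y) = sum_k a_k x^i_k y^j_k and p(X,Y) = M(3) *m a. *)
Definition peval (R : nzRingType) (a : 'cV[R]_10) (z : R * R) : R :=
  \sum_(k < 10) a k ord0 * z.1 ^+ (mono k).1 * z.2 ^+ (mono k).2.

Definition pcols (R : nzRingType) (beta : nat -> nat -> R) (a : 'cV[R]_10)
  : 'cV[R]_10 := M3 beta *m a.

Definition variety (R : nzRingType) (beta : nat -> nat -> R) : set (R * R) :=
  [set z | forall a : 'cV[R]_10, pcols beta a = 0 -> peval a z = 0].

Definition variety_card (T : eqType) (V : set T) (n : nat) : Prop :=
  exists s : seq T, [/\ uniq s, size s = n & forall z, V z <-> z \in s].

Definition weakly_consistent (R : nzRingType) (beta : nat -> nat -> R) : Prop :=
  forall a : 'cV[R]_10,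
    (forall z, variety beta z -> peval a z = 0) -> pcols beta a = 0.

(* Indices of B2 = {1, X, Y, X^2, XY, Y^2, X^2Y} among the 10 monomials. *)
Definition B2_list : seq nat := [:: 0; 1; 2; 3; 4; 5; 7]%N.
Definition B2_idx (k : 'I_7) : 'I_10 := inord (nth 0%N B2_list k).

(* The columns B2 form a basis of the column space of M(3):
   they are linearly independent and every column of M(3) is in their span. *)
Definition B2_basis (R : fieldType) (beta : nat -> nat -> R) : Prop :=
  let B := colsub B2_idx (M3 beta) in
  row_free B^T /\ ((M3 beta)^T <= B^T)%MS.

Definition has_rep_measure (R : realType) (beta : nat -> nat -> R) : Prop :=
  exists mu : {measure set (R * R)%type -> \bar R},
    forall i j : nat, (i + j <= 6)%N ->
      mu.-integrable setT (fun z : R * R => (z.1 ^+ i * z.2 ^+ j)%:E) /\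
      (\int[mu]_z (z.1 ^+ i * z.2 ^+ j)%:E = (beta i j)%:E)%E.

(* Main.v *)
Require Import Defs.
From HB Require Import structures.
From mathcomp Require Import all_boot all_order all_algebra.
From mathcomp Require Import all_classical all_reals all_analysis.
From mathcomp Require Import measurable_realfun.
From mathcomp.algebra_tactics Require Import ring lra.
From Stdlib Require Import Lia.
From mathcomp.zify Require Import zify.
Set Implicit Arguments. Unset Strict Implicit. Unset Printing Implicit Defensive.
Import Order.TTheory GRing.Theory Num.Theory.
Local Open Scope ring_scope.

Definition o0 : 'I_10 := @Ordinal 10 0 isT.
Definition o1 : 'I_10 := @Ordinal 10 1 isT.
Definition o2 : 'I_10 := @Ordinal 10 2 isT.
Definition o3 : 'I_10 := @Ordinal 10 3 isT.
Definition o4 : 'I_10 := @Ordinal 10 4 isT.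
Definition o5 : 'I_10 := @Ordinal 10 5 isT.
Definition o6 : 'I_10 := @Ordinal 10 6 isT.
Definition o7 : 'I_10 := @Ordinal 10 7 isT.
Definition o8 : 'I_10 := @Ordinal 10 8 isT.
Definition o9 : 'I_10 := @Ordinal 10 9 isT.

Lemma sum10 (R : zmodType) (F : 'I_10 -> R) : \sum_(i < 10) F i =
  F o0 + F o1 + F o2 + F o3 + F o4 + F o5 + F o6 + F o7 + F o8 + F o9.
Proof.
rewrite !big_ord_recr big_ord0 /= add0r.
by repeat congr (_ + _); congr F; apply: val_inj.
Qed.

Lemma mono_deg (a : 'I_10) : ((mono a).1 + (mono a).2 <= 3)%N.
Proof. by case: a => [[|[|[|[|[|[|[|[|[|[|//]]]]]]]]]] ?]. Qed.

Lemma mono_inj : injective mono.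
Proof.
move=> [[|[|[|[|[|[|[|[|[|[|//]]]]]]]]]] ?] [[|[|[|[|[|[|[|[|[|[|//]]]]]]]]]] ?] //= _;
  by apply: val_inj.
Qed.

Lemma mono_surj (c1 c2 : nat) : (c1 + c2 <= 3)%N -> exists g : 'I_10, mono g = (c1, c2).
Proof.
move=> h.
have [c1le|] := leqP c1 3; last by move=> ?; lia.
move: c1le h; case: c1 => [|[|[|[|//]]]] _; case: c2 => [|[|[|[|//]]]] //= _.
- by exists o0. - by exists o2. - by exists o5. - by exists o9.
- by exists o1. - by exists o4. - by exists o8.
- by exists o3. - by exists o7. - by exists o6.
Qed.

Section Alg.
Variable R : realType.
Local Notation cv := 'cV[R]_10.
Variable beta : nat -> nat -> R.

Definition shS (f : cv) (c1 c2 a b : nat) : R :=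
  \sum_(g < 10) (if ((mono g).1 + c1 == a)%N && ((mono g).2 + c2 == b)%N
                 then f g 0 else 0).

Definition Xm (i j a b : nat) : R := if (a == i)%N && (b == j)%N then 1 else 0.

Definition Lam (h : nat -> nat -> R) : R :=
  \sum_(a < 7) \sum_(b < 7) (if (a + b <= 6)%N then h a b * beta a b else 0).

Definition evp (h : nat -> nat -> R) (z : R * R) : R :=
  \sum_(a < 7) \sum_(b < 7) (if (a + b <= 6)%N then h a b * (z.1 ^+ a * z.2 ^+ b) else 0).

Lemma Lam_ext h h' : (forall a b, (a + b <= 6)%N -> h a b = h' a b) -> Lam h = Lam h'.
Proof.
move=> e; apply: eq_bigr => a _; apply: eq_bigr => b _.
by case: ifP => // /e ->.
Qed.

Lemma evp_ext h h' z : (forall a b, (a + b <= 6)%N -> h a b = h' a b) -> evp h z = evp h' z.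
Proof.
move=> e; apply: eq_bigr => a _; apply: eq_bigr => b _.
by case: ifP => // /e ->.
Qed.

Lemma Lam_lin k h1 h2 : Lam (fun a b => k * h1 a b + h2 a b) = k * Lam h1 + Lam h2.
Proof.
rewrite /Lam mulr_sumr -big_split; apply: eq_bigr => a _.
rewrite mulr_sumr -big_split; apply: eq_bigr => b _.
by case: ifP => _ /=; ring.
Qed.

Lemma evp_lin k h1 h2 z : evp (fun a b => k * h1 a b + h2 a b) z = k * evp h1 z + evp h2 z.
Proof.
rewrite /evp mulr_sumr -big_split; apply: eq_bigr => a _.
rewrite mulr_sumr -big_split; apply: eq_bigr => b _.
by case: ifP => _ /=; ring.
Qed.

Lemma Lam_sum n (F : 'I_n -> nat -> nat -> R) :
  Lam (fun a b => \sum_(i < n) F i a b) = \sum_(i < n) Lam (F i).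
Proof.
elim: n F => [|n IH] F.
  by rewrite big_ord0 /Lam; apply: big1 => a _; apply: big1 => b _;
     rewrite big_ord0 mul0r if_same.
rewrite big_ord_recr /= -IH.
rewrite -[X in _ = X + _]mul1r -Lam_lin.
by apply: Lam_ext => a b _; rewrite big_ord_recr /= mul1r.
Qed.

Lemma evp_sum n (F : 'I_n -> nat -> nat -> R) z :
  evp (fun a b => \sum_(i < n) F i a b) z = \sum_(i < n) evp (F i) z.
Proof.
elim: n F => [|n IH] F.
  by rewrite big_ord0 /evp; apply: big1 => a _; apply: big1 => b _;
     rewrite big_ord0 mul0r if_same.
rewrite big_ord_recr /= -IH.
rewrite -[X in _ = X + _]mul1r -evp_lin.
by apply: evp_ext => a b _; rewrite big_ord_recr /= mul1r.
Qed.

Lemma sum_pickF n c (F : nat -> R) : (c < n)%N ->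
  \sum_(b < n) (if (b == c :> nat) then F b else 0) = F c.
Proof. by move=> h; rewrite -big_mkcond (big_ord1_eq _ F) h. Qed.

Lemma pick2 (G : nat -> nat -> R) c1 c2 : (c1 + c2 <= 6)%N ->
  \sum_(a < 7) \sum_(b < 7) (if (a + b <= 6)%N then G a b * Xm c1 c2 a b else 0)
  = G c1 c2.
Proof.
move=> hc.
transitivity (\sum_(a < 7) (if (a == c1 :> nat) then G a c2 else 0)).
  apply: eq_bigr => a _.
  transitivity (\sum_(b < 7) (if (b == c2 :> nat) then
                   (if (a == c1 :> nat) then G a c2 else 0) else 0)).
    apply: eq_bigr => b _; rewrite /Xm.
    case: (eqVneq (a : nat) c1) => [->|ne]; case: (eqVneq (b : nat) c2) => [->|ne2] /=;
      by rewrite ?hc ?mulr1 ?mulr0 ?if_same.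
  by rewrite (sum_pickF (fun _ => if (a == c1 :> nat) then G a c2 else 0)) //; lia.
by rewrite (sum_pickF (fun a => G a c2)) //; lia.
Qed.

Lemma Lam_Xm i j : (i + j <= 6)%N -> Lam (Xm i j) = beta i j.
Proof.
move=> h; rewrite /Lam -(pick2 (fun a b => beta a b) h).
apply: eq_bigr => a _; apply: eq_bigr => b _; by rewrite mulrC.
Qed.

Lemma evp_Xm i j z : (i + j <= 6)%N -> evp (Xm i j) z = z.1 ^+ i * z.2 ^+ j.
Proof.
move=> h; rewrite /evp -(pick2 (fun a b => z.1 ^+ a * z.2 ^+ b) h).
apply: eq_bigr => a _; apply: eq_bigr => b _; by rewrite mulrC.
Qed.

Lemma shS_Xm f c1 c2 a b :
  shS f c1 c2 a b = \sum_(g < 10) f g 0 * Xm ((mono g).1 + c1) ((mono g).2 + c2) a b.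
Proof.
apply: eq_bigr => g _; rewrite /Xm [(a == _)%N]eq_sym [(b == _)%N]eq_sym.
by case: ifP; rewrite ?mulr1 ?mulr0.
Qed.

Lemma Lam_shS f c1 c2 : (c1 + c2 <= 3)%N ->
  Lam (shS f c1 c2) = \sum_(g < 10) f g 0 * beta ((mono g).1 + c1) ((mono g).2 + c2).
Proof.
move=> hc.
rewrite (Lam_ext (h' := fun a b => \sum_(g < 10) (f g 0 * Xm ((mono g).1 + c1) ((mono g).2 + c2) a b + 0))); last first.
  by move=> a b _; rewrite shS_Xm; apply: eq_bigr => g _; rewrite addr0.
rewrite Lam_sum; apply: eq_bigr => g _.
rewrite Lam_lin.
rewrite (_ : Lam (fun _ _ => 0) = 0); last first.
  by apply: big1 => a _; apply: big1 => b _; rewrite mul0r if_same.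
rewrite addr0 Lam_Xm //.
have := mono_deg g; lia.
Qed.

Lemma evp_shS f c1 c2 z : (c1 + c2 <= 3)%N ->
  evp (shS f c1 c2) z = peval f z * (z.1 ^+ c1 * z.2 ^+ c2).
Proof.
move=> hc.
rewrite (evp_ext _ (h' := fun a b => \sum_(g < 10) (f g 0 * Xm ((mono g).1 + c1) ((mono g).2 + c2) a b + 0))); last first.
  by move=> a b _; rewrite shS_Xm; apply: eq_bigr => g _; rewrite addr0.
rewrite evp_sum /peval mulr_suml; apply: eq_bigr => g _.
rewrite evp_lin.
rewrite (_ : evp (fun _ _ => 0) z = 0); last first.
  by apply: big1 => a _; apply: big1 => b _; rewrite mul0r if_same.
rewrite addr0 evp_Xm; last by have := mono_deg g; lia.
rewrite !exprD; ring.
Qed.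

End Alg.
Arguments Xm {R} i j a b.

Section Good.
Variable R : realType.
Variable beta : nat -> nat -> R.
Variable z : 'I_7 -> R * R.
Local Notation M := (M3 beta).

Definition Good (h : nat -> nat -> R) :=
  exists b : 'cV[R]_10, Lam beta h = (M *m b) o0 0 /\ forall k, evp h (z k) = peval b (z k).

Lemma peval_lin (k : R) (b1 b2 : 'cV[R]_10) (w : R * R) : peval (k *: b1 + b2) w = k * peval b1 w + peval b2 w.
Proof.
rewrite /peval mulr_sumr -big_split; apply: eq_bigr => g _; rewrite !mxE /=; ring.
Qed.

Lemma Good_lin k h1 h2 : Good h1 -> Good h2 -> Good (fun a b => k * h1 a b + h2 a b).
Proof.
move=> [b1 [L1 E1]] [b2 [L2 E2]]; exists (k *: b1 + b2); split.
  by rewrite Lam_lin L1 L2 mulmxDr -scalemxAr !mxE.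
by move=> i; rewrite evp_lin E1 E2 peval_lin.
Qed.

Lemma Good_ext h h' : (forall a b, (a + b <= 6)%N -> h a b = h' a b) -> Good h -> Good h'.
Proof.
move=> e [b [L E]]; exists b; split; first by rewrite -(Lam_ext _ e).
by move=> i; rewrite -(evp_ext _ e).
Qed.

Lemma Good0 : Good (fun _ _ => 0).
Proof.
exists 0; split.
  by rewrite mulmx0 mxE; apply: big1 => a _; apply: big1 => b _; rewrite mul0r if_same.
move=> k; rewrite /peval big1; last by move=> g _; rewrite mxE !mul0r.
by apply: big1 => a _; apply: big1 => b _; rewrite mul0r if_same.
Qed.

Lemma Good_scale k h : Good h -> Good (fun a b => k * h a b).
Proof.
move=> G; apply: (Good_ext (h := fun a b => k * h a b + 0)); first by move=> a b _; rewrite addr0.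
exact: Good_lin G Good0.
Qed.

Lemma Good_sum n (F : 'I_n -> nat -> nat -> R) :
  (forall i, Good (F i)) -> Good (fun a b => \sum_(i < n) F i a b).
Proof.
elim: n F => [|n IH] F GF.
  by apply: Good_ext Good0 => a b _; rewrite big_ord0.
apply: (Good_ext (h := fun a b => 1 * (\sum_(i < n) F (widen_ord (leqnSn n) i) a b) + F ord_max a b)).
  by move=> a b _; rewrite big_ord_recr /= mul1r.
by apply: Good_lin; [apply: IH | ].
Qed.

Lemma Good_if (c : bool) h : Good h -> Good (fun a b => if c then h a b else 0).
Proof. by case: c => // _; exact: Good0. Qed.

Lemma mul_delta_col (A : 'M[R]_10) (r g : 'I_10) : (A *m (delta_mx g ord0 : 'cV[R]_10)) r 0 = A r g.
Proof.
rewrite mxE (bigD1 g) //= mxE !eqxx mulr1 big1 ?addr0 // => i ne.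
by rewrite mxE (negbTE ne) mulr0.
Qed.

Lemma peval_delta (g : 'I_10) w : peval ((delta_mx g ord0 : 'cV[R]_10)) w = w.1 ^+ (mono g).1 * w.2 ^+ (mono g).2.
Proof.
rewrite /peval (bigD1 g) //= mxE !eqxx mul1r big1 ?addr0 // => i ne.
by rewrite mxE (negbTE ne) !mul0r.
Qed.

Lemma Good_Xm_low i j : (i + j <= 3)%N -> Good (Xm i j).
Proof.
move=> h; have [g eg] := mono_surj h.
exists ((delta_mx g ord0 : 'cV[R]_10)); split.
  by rewrite Lam_Xm ?mul_delta_col ?mxE ?eg //; lia.
by move=> k; rewrite evp_Xm ?peval_delta ?eg //; lia.
Qed.

Lemma Good_shS_ker p c1 c2 : M *m p = 0 -> (forall k, peval p (z k) = 0) ->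
  (c1 + c2 <= 3)%N -> Good (shS p c1 c2).
Proof.
move=> Mp pz hc; exists 0; split.
  rewrite mulmx0 mxE Lam_shS //.
  have [g eg] := mono_surj hc.
  transitivity ((M *m p) g 0); last by rewrite Mp mxE.
  by rewrite mxE; apply: eq_bigr => i _; rewrite !mxE eg /= mulrC addnC [(_ + c2)%N]addnC.
move=> k; rewrite evp_shS // pz mul0r /peval big1 // => i _; by rewrite mxE !mul0r.
Qed.

Lemma Good_support d h : (forall a b, (d < a + b)%N -> (a + b <= 6)%N -> h a b = 0) ->
  (forall i j, (i + j <= d)%N -> Good (Xm i j)) -> Good h.
Proof.
move=> hz GX.
apply: (Good_ext (h := fun a b => \sum_(i < 7) \sum_(j < 7)
          (if (i + j <= d)%N then h i j * Xm i j a b else 0))); last first.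
  apply: Good_sum => i; apply: Good_sum => j.
  case hij: (i + j <= d)%N; last exact: Good0.
  by apply: Good_scale; apply: GX.
move=> a b hab.
transitivity (\sum_(i < 7) if (i == a :> nat) then
   (if (i + b <= d)%N then h i b else 0) else 0).
  apply: eq_bigr => i _.
  transitivity (\sum_(j < 7) if (j == b :> nat) then
     (if (i == a :> nat) then (if (i + b <= d)%N then h i b else 0) else 0) else 0).
    apply: eq_bigr => j _; rewrite /Xm.
    case: (eqVneq (j : nat) b) => [->|ne2]; case: (eqVneq (i : nat) a) => [->|ne] /=;
      rewrite ?eqxx ?andbT ?andbF ?(negbTE ne) ?(negbTE ne2) ?mulr1 ?mulr0 ?if_same //.
  rewrite (sum_pickF (fun _ => if (i == a :> nat) then (if (i + b <= d)%N then h i b else 0) else 0)) //.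
  lia.
rewrite (sum_pickF (fun i => if (i + b <= d)%N then h i b else 0)); last by lia.
case: leqP => // hd; rewrite hz //.
Qed.

Definition mulc (f g : 'cV[R]_10) (a b : nat) : R :=
  \sum_(k < 10) g k 0 * shS f (mono k).1 (mono k).2 a b.

Lemma Good_shS_all f c1 c2 : (forall i j, (i + j <= 6)%N -> Good (Xm i j)) ->
  (c1 + c2 <= 3)%N -> Good (shS f c1 c2).
Proof.
move=> GX hc.
apply: (Good_ext (h := fun a b => \sum_(g < 10) f g 0 * Xm ((mono g).1 + c1) ((mono g).2 + c2) a b)).
  by move=> a b _; rewrite shS_Xm.
apply: Good_sum => g; apply: Good_scale; apply: GX.
have := mono_deg g; lia.
Qed.

Lemma Good_mulc f g : (forall i j, (i + j <= 6)%N -> Good (Xm i j)) -> Good (mulc f g).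
Proof.
move=> GX; apply: Good_sum => k; apply: Good_scale; apply: Good_shS_all => //.
exact: mono_deg.
Qed.

End Good.

Section MulcFacts.
Variable R : realType.
Variable beta : nat -> nat -> R.

Lemma Lam_mulc (f g : 'cV[R]_10) :
  Lam beta (mulc f g) = \sum_(k < 10) g k 0 * (M3 beta *m f) k 0.
Proof.
rewrite /mulc Lam_sum; apply: eq_bigr => k _.
rewrite (@Lam_ext _ beta _ (fun a b => g k 0 * shS f (mono k).1 (mono k).2 a b + 0)); last first.
  by move=> a b _; rewrite addr0.
rewrite Lam_lin.
rewrite (_ : Lam beta (fun _ _ => 0) = 0); last first.
  by apply: big1 => a _; apply: big1 => b _; rewrite mul0r if_same.
rewrite addr0 Lam_shS ?mono_deg // mxE; congr (_ * _); apply: eq_bigr => i _.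
by rewrite !mxE mulrC addnC [(_ + (mono k).2)%N]addnC.
Qed.

Lemma evp_mulc (f g : 'cV[R]_10) w :
  evp (mulc f g) w = peval f w * peval g w.
Proof.
rewrite /mulc evp_sum /peval mulr_sumr; apply: eq_bigr => k _.
rewrite (@evp_ext _ _ (fun a b => g k 0 * shS f (mono k).1 (mono k).2 a b + 0)); last first.
  by move=> a b _; rewrite addr0.
rewrite evp_lin.
rewrite (_ : evp (fun _ _ => 0) w = 0); last first.
  by apply: big1 => a _; apply: big1 => b _; rewrite mul0r if_same.
rewrite addr0 evp_shS ?mono_deg // /peval; ring.
Qed.

End MulcFacts.

Section Shift.
Variable R : realType.

Lemma eq_shift (x c m a : nat) : (m <= a)%N -> (x + (c + m) == a)%N = (x + c == a - m)%N.
Proof. by move=> h; apply/eqP/eqP; lia. Qed.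

Lemma shS_shift (f : 'cV[R]_10) c1 c2 m1 m2 a b :
  shS f (c1 + m1) (c2 + m2) a b =
  if (m1 <= a)%N && (m2 <= b)%N then shS f c1 c2 (a - m1) (b - m2) else 0.
Proof.
case: ifP => [/andP [h1 h2]|h].
  by apply: eq_bigr => g _; rewrite !eq_shift.
apply: big1 => g _; case: ifP => // /andP [/eqP e1 /eqP e2].
move/negbT: h; rewrite negb_and => /orP [] /negP []; lia.
Qed.

Lemma Xm_shift i j m1 m2 a b :
  Xm (i + m1) (j + m2) a b = if (m1 <= a)%N && (m2 <= b)%N then (Xm i j (a - m1) (b - m2) : R) else 0.
Proof.
rewrite /Xm; case: (boolP ((m1 <= a)%N && (m2 <= b)%N)) => [/andP[h1 h2]|h].
  have E : ((a == i + m1)%N && (b == j + m2)%N) = ((a - m1 == i)%N && (b - m2 == j)%N).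
    by apply/idP/idP => /andP [/eqP ? /eqP ?]; apply/andP; split; apply/eqP; lia.
  by rewrite E.
case: ifP => // /andP [/eqP e1 /eqP e2]; exfalso; move: h; rewrite e1 e2; lia.
Qed.

Lemma shS_high (f : 'cV[R]_10) c1 c2 a b : (c1 + c2 + 3 < a + b)%N -> shS f c1 c2 a b = 0.
Proof.
move=> h; apply: big1 => g _; case: ifP => // /andP [/eqP e1 /eqP e2].
have := mono_deg g; lia.
Qed.

Lemma Xm_high i j a b : (i + j != a + b)%N -> (Xm i j a b : R) = 0.
Proof. by move=> h; rewrite /Xm; case: ifP => // /andP [/eqP e1 /eqP e2]; move: h; rewrite e1 e2 eqxx. Qed.

End Shift.

Section Reduction.
Variable R : realType.
Variables P1 P2 P3 : 'cV[R]_10.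

Definition Pof (s : nat) := match s with 0%N => P1 | 1%N => P2 | _ => P3 end.

Definition entry := (R * (nat * (nat * nat)))%type.

Definition ent (k : R) (s c1 c2 : nat) : entry := (k, (s, (c1, c2))).

Definition rsum (L : seq entry) (a b : nat) : R :=
  \sum_(e <- L) e.1 * shS (Pof e.2.1) e.2.2.1 e.2.2.2 a b.

Definition scaleL (k : R) (L : seq entry) : seq entry :=
  map (fun e => (k * e.1, e.2)) L.

Definition shiftL (m1 m2 : nat) (L : seq entry) : seq entry :=
  map (fun e => (e.1, (e.2.1, (e.2.2.1 + m1, e.2.2.2 + m2))%N)) L.

Lemma rsum_cons e L a b : rsum (e :: L) a b = e.1 * shS (Pof e.2.1) e.2.2.1 e.2.2.2 a b + rsum L a b.
Proof. by rewrite /rsum big_cons. Qed.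

Lemma rsum_scale k L a b : rsum (scaleL k L) a b = k * rsum L a b.
Proof.
elim: L => [|e L IH]; first by rewrite /rsum !big_nil mulr0.
by rewrite /scaleL /= !rsum_cons -/(scaleL k L) IH /=; ring.
Qed.

Lemma rsum_shift m1 m2 L a b : rsum (shiftL m1 m2 L) a b =
  if (m1 <= a)%N && (m2 <= b)%N then rsum L (a - m1) (b - m2) else 0.
Proof.
elim: L => [|e L IH]; first by rewrite /rsum !big_nil if_same.
rewrite /shiftL /= !rsum_cons -/(shiftL m1 m2 L) IH /= shS_shift.
by case: ifP => _; rewrite ?mulr0 ?addr0.
Qed.

Lemma rsum_high L a b d : (forall e, e \in L -> (e.2.2.1 + e.2.2.2 + 3 = d)%N) ->
  (d < a + b)%N -> rsum L a b = 0.
Proof.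
move=> hL hd; apply: big1_seq => e /andP [_ /hL he].
by rewrite shS_high ?mulr0 //; rewrite he.
Qed.

Variables (A B C : R) (L31 L22 : seq entry).
Hypothesis H31 : forall a, (a <= 4)%N -> Xm 3 1 a (4 - a) = rsum L31 a (4 - a).
Hypothesis H22 : forall a, (a <= 4)%N -> Xm 2 2 a (4 - a) = rsum L22 a (4 - a).
Hypothesis P1t : [/\ P1 o6 0 = 1, P1 o7 0 = A, P1 o8 0 = 0 & P1 o9 0 = 0].
Hypothesis P2t : [/\ P2 o6 0 = 0, P2 o7 0 = B, P2 o8 0 = 1 & P2 o9 0 = 0].
Hypothesis P3t : [/\ P3 o6 0 = 0, P3 o7 0 = C, P3 o8 0 = 0 & P3 o9 0 = 1].

Definition repq (i : nat) : seq entry :=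
  match i with
  | 4%N => ent 1 0 1 0 :: scaleL (- A) L31
  | 3%N => L31
  | 2%N => L22
  | 1%N => ent 1 1 0 1 :: scaleL (- B) L22
  | _ => ent 1 2 0 1 :: scaleL (- C) L22
  end.

Lemma repq_ok i a : (i <= 4)%N -> (a <= 4)%N ->
  Xm i (4 - i) a (4 - a) = rsum (repq i) a (4 - a).
Proof.
case: P1t => p16 p17 p18 p19; case: P2t => p26 p27 p28 p29; case: P3t => p36 p37 p38 p39.
case: i => [|[|[|[|[|//]]]]] _ ha; rewrite /repq ?rsum_cons ?rsum_scale -?H31 -?H22 //;
move: ha; case: a => [|[|[|[|[|//]]]]] _ /=;
rewrite /shS !sum10 /= ?p16 ?p17 ?p18 ?p19 ?p26 ?p27 ?p28 ?p29 ?p36 ?p37 ?p38 ?p39 /Xm /=; ring.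
Qed.

Hypothesis Ldeg : forall e, (e \in L31) || (e \in L22) -> (e.2.2.1 + e.2.2.2 = 1)%N.

Lemma repq_deg i e : e \in repq i -> (e.2.2.1 + e.2.2.2 = 1)%N.
Proof.
have sc k L e' : e' \in scaleL k L -> exists e0, e0 \in L /\ e'.2 = e0.2.
  by move=> /mapP [e0 he0 ->]; exists e0.
case: i => [|[|[|[|[|i]]]]] /=; rewrite ?inE;
  try (by move=> he; apply: Ldeg; rewrite he ?orbT);
  by move=> /orP [/eqP -> //| /sc [e0 [he0 ->]]]; apply: Ldeg; rewrite he0 ?orbT.
Qed.

Definition rep (i j : nat) : seq entry :=
  shiftL (i - minn i 4) (j - (4 - minn i 4))%N (repq (minn i 4%N)).

Lemma rep_ok i j a b : (4 <= i + j)%N -> (a + b = i + j)%N ->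
  Xm i j a b = rsum (rep i j) a b.
Proof.
move=> h4 hab; rewrite /rep.
set q := minn i 4.
have hq : (q <= 4)%N by rewrite /q geq_minr.
have ei : i = (q + (i - q))%N by rewrite /q; lia.
have ej : j = ((4 - q) + (j - (4 - q)))%N by rewrite /q; lia.
rewrite {1}ei {1}ej Xm_shift rsum_shift.
case: ifP => // /andP [h1 h2].
have eb : (b - (j - (4 - q)) = 4 - (a - (i - q)))%N by rewrite /q in hq h1 h2 *; lia.
rewrite eb repq_ok //; rewrite /q in h1 h2 *; lia.
Qed.

Lemma rep_high i j a b : (4 <= i + j)%N -> (i + j < a + b)%N -> rsum (rep i j) a b = 0.
Proof.
move=> h4 hab; rewrite /rep rsum_shift; case: ifP => // /andP [h1 h2].
apply: (@rsum_high _ _ _ 4%N) => [e /repq_deg -> //|].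
lia.
Qed.

Lemma rep_deg i j e : (4 <= i + j)%N -> e \in rep i j -> (e.2.2.1 + e.2.2.2 + 3 = i + j)%N.
Proof.
move=> h4 /mapP [e0 /repq_deg he0 ->] /=.
move: he0; case: (leqP i 4) => hi; move: (e0.2.2.1) (e0.2.2.2) => x y; lia.
Qed.

Section GoodInd.
Variable beta : nat -> nat -> R.
Variable z : 'I_7 -> R * R.
Hypothesis KP : forall s, M3 beta *m Pof s = 0.
Hypothesis ZP : forall s k, peval (Pof s) (z k) = 0.

Lemma Good_rsum L : (forall e, e \in L -> (e.2.2.1 + e.2.2.2 <= 3)%N) -> Good beta z (rsum L).
Proof.
elim: L => [|e L IH] hL.
  by apply: Good_ext (Good0 beta z) => a b _; rewrite /rsum big_nil.
apply: (Good_ext (h := fun a b => e.1 * shS (Pof e.2.1) e.2.2.1 e.2.2.2 a b + rsum L a b)).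
  by move=> a b _; rewrite rsum_cons.
apply: Good_lin; last by apply: IH => e' he'; apply: hL; rewrite inE he' orbT.
apply: Good_shS_ker => //; apply: hL; exact: mem_head.
Qed.

Lemma Good_all_ind d : (d <= 6)%N -> forall i j, (i + j <= d)%N -> Good beta z (Xm i j).
Proof.
elim: d => [|d IH] hd i j hij.
  by apply: Good_Xm_low; lia.
have [hle|hgt] := leqP (i + j) d.
  by apply: IH => //; lia.
have [h3|h4] := leqP d.+1 3.
  by apply: Good_Xm_low; lia.
have eij : (i + j = d.+1)%N by lia.
apply: (Good_ext (h := fun a b => 1 * (Xm i j a b - rsum (rep i j) a b) + rsum (rep i j) a b)).
  by move=> a b _; rewrite mul1r subrK.
apply: Good_lin.
  apply: (Good_support (d := d)); last by move=> i' j' h; apply: IH => //; lia.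
  move=> a b h1 h2.
  have [e|ne] := eqVneq (a + b)%N (i + j).
    by rewrite (rep_ok (a := a) (b := b)) ?subrr //; lia.
  rewrite Xm_high; last by rewrite eq_sym.
  by rewrite rep_high ?subrr //; lia.
have h4' : (4 <= i + j)%N by lia.
apply: Good_rsum => e he; have := rep_deg h4' he; move: (e.2.2.1) (e.2.2.2) => x y; lia.
Qed.

End GoodInd.

End Reduction.

Section Generic.
Variable R : realType.
Variables P1 P2 P3 : 'cV[R]_10.
Variables (A B C : R).
Hypothesis P1t : [/\ P1 o6 0 = 1, P1 o7 0 = A, P1 o8 0 = 0 & P1 o9 0 = 0].
Hypothesis P2t : [/\ P2 o6 0 = 0, P2 o7 0 = B, P2 o8 0 = 1 & P2 o9 0 = 0].
Hypothesis P3t : [/\ P3 o6 0 = 0, P3 o7 0 = C, P3 o8 0 = 0 & P3 o9 0 = 1].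

Lemma Ldeg_of (L1 L2 : seq (entry R)) :
  all (fun e : entry R => e.2.2.1 + e.2.2.2 == 1)%N (L1 ++ L2) ->
  forall e, (e \in L1) || (e \in L2) -> (e.2.2.1 + e.2.2.2 = 1)%N.
Proof. by move/allP => H e he; apply/eqP; apply: H; rewrite mem_cat. Qed.

Section Case1.
Hypothesis D1 : 1 - A * B != 0.
Definition L31a : seq (entry R) := [:: ent (1 / (1 - A * B)) 0 0 1; ent (- A / (1 - A * B)) 1 1 0].
Definition L22a : seq (entry R) := [:: ent (1 / (1 - A * B)) 1 1 0; ent (- B / (1 - A * B)) 0 0 1].

Lemma H31a a : (a <= 4)%N -> Xm 3 1 a (4 - a) = rsum P1 P2 P3 L31a a (4 - a).
Proof.
case: P1t => p16 p17 p18 p19; case: P2t => p26 p27 p28 p29; case: P3t => p36 p37 p38 p39.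
case: a => [|[|[|[|[|//]]]]] _; rewrite /rsum /L31a !big_cons big_nil /= /shS !sum10 /=
  ?p16 ?p17 ?p18 ?p19 ?p26 ?p27 ?p28 ?p29 ?p36 ?p37 ?p38 ?p39 /Xm /=; field; by [].
Qed.

Lemma H22a a : (a <= 4)%N -> Xm 2 2 a (4 - a) = rsum P1 P2 P3 L22a a (4 - a).
Proof.
case: P1t => p16 p17 p18 p19; case: P2t => p26 p27 p28 p29; case: P3t => p36 p37 p38 p39.
case: a => [|[|[|[|[|//]]]]] _; rewrite /rsum /L22a !big_cons big_nil /= /shS !sum10 /=
  ?p16 ?p17 ?p18 ?p19 ?p26 ?p27 ?p28 ?p29 ?p36 ?p37 ?p38 ?p39 /Xm /=; field; by [].
Qed.
End Case1.

Section Case2.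
Hypothesis D2 : B + A * C != 0.
Definition L31b : seq (entry R) :=
  [:: ent (B / (B + A * C)) 0 0 1; ent (- A / (B + A * C)) 1 0 1; ent (A / (B + A * C)) 2 1 0].
Definition L22b : seq (entry R) :=
  [:: ent (C / (B + A * C)) 0 0 1; ent (1 / (B + A * C)) 1 0 1; ent (-1 / (B + A * C)) 2 1 0].

Lemma H31b a : (a <= 4)%N -> Xm 3 1 a (4 - a) = rsum P1 P2 P3 L31b a (4 - a).
Proof.
case: P1t => p16 p17 p18 p19; case: P2t => p26 p27 p28 p29; case: P3t => p36 p37 p38 p39.
case: a => [|[|[|[|[|//]]]]] _; rewrite /rsum /L31b !big_cons big_nil /= /shS !sum10 /=
  ?p16 ?p17 ?p18 ?p19 ?p26 ?p27 ?p28 ?p29 ?p36 ?p37 ?p38 ?p39 /Xm /=; field; by [].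
Qed.

Lemma H22b a : (a <= 4)%N -> Xm 2 2 a (4 - a) = rsum P1 P2 P3 L22b a (4 - a).
Proof.
case: P1t => p16 p17 p18 p19; case: P2t => p26 p27 p28 p29; case: P3t => p36 p37 p38 p39.
case: a => [|[|[|[|[|//]]]]] _; rewrite /rsum /L22b !big_cons big_nil /= /shS !sum10 /=
  ?p16 ?p17 ?p18 ?p19 ?p26 ?p27 ?p28 ?p29 ?p36 ?p37 ?p38 ?p39 /Xm /=; field; by [].
Qed.
End Case2.

Variable beta : nat -> nat -> R.
Variable z : 'I_7 -> R * R.
Hypothesis KP : forall s, M3 beta *m Pof P1 P2 P3 s = 0.
Hypothesis ZP : forall s k, peval (Pof P1 P2 P3 s) (z k) = 0.

Theorem Good_generic : (1 - A * B != 0) \/ (B + A * C != 0) ->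
  forall i j, (i + j <= 6)%N -> Good beta z (Xm i j).
Proof.
case=> [D|D] i j hij.
  have := @Good_all_ind _ P1 P2 P3 A B C L31a L22a (H31a D) (H22a D) P1t P2t P3t
    (Ldeg_of (L1 := L31a) (L2 := L22a) erefl) beta z KP ZP 6%N erefl i j hij.
  by [].
have := @Good_all_ind _ P1 P2 P3 A B C L31b L22b (H31b D) (H22b D) P1t P2t P3t
    (Ldeg_of (L1 := L31b) (L2 := L22b) erefl) beta z KP ZP 6%N erefl i j hij.
by [].
Qed.

End Generic.

Section MxFacts.
Variable F : fieldType.

Lemma mul_col_entry m n p (A : 'M[F]_(m, n)) (B : 'M[F]_(n, p)) i j :
  (A *m B) i j = (A *m col j B) i 0.
Proof. by rewrite !mxE; apply: eq_bigr => k _; rewrite !mxE. Qed.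

Lemma row_in_span m n (E : 'M[F]_(m, n)) (r : 'rV[F]_n) :
  (forall f : 'cV[F]_n, E *m f = 0 -> r *m f = 0) -> exists l : 'rV[F]_m, r = l *m E.
Proof.
move=> H; apply/submxP; rewrite submxE; apply/eqP/matrixP => i j.
rewrite mul_col_entry H ?mxE //.
by apply/matrixP => a b; rewrite ord1 -mul_col_entry mulmx_coker !mxE.
Qed.

Lemma rank_full_col m n (E : 'M[F]_(m, n)) :
  (forall c : 'cV[F]_n, E *m c = 0 -> c = 0) -> \rank E = n.
Proof.
move=> H.
have K0 : kermx E^T = 0.
  apply/row_matrixP => i; rewrite row0.
  have : row i (kermx E^T) *m E^T = 0 by rewrite -row_mul mulmx_ker row0.
  move=> h; have := H (row i (kermx E^T))^T.
  rewrite -[E *m _]trmxK trmx_mul trmxK h trmx0 => /(_ erefl) /eqP.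
  by rewrite trmx_eq0 => /eqP.
have := mxrank_ker E^T; rewrite K0 mxrank0 mxrank_tr => e.
have := rank_leq_col E; lia.
Qed.

Lemma rank1_prop m n (U : 'M[F]_(m, n)) (u v : 'rV[F]_n) :
  \rank U = 1%N -> (u <= U)%MS -> (v <= U)%MS -> u != 0 -> exists k : F, v = k *: u.
Proof.
move=> rU uU vU u0.
have Uu : (U <= u)%MS.
  by have := mxrank_leqif_sup uU; rewrite rU rank_rV u0 => -[_ <-].
have : (v <= u)%MS by apply: submx_trans vU Uu.
move=> /submxP [D ->]; exists (D 0 0).
apply/rowP => j; rewrite !mxE big_ord1 //.
Qed.

End MxFacts.

Definition q0 : 'I_6 := @Ordinal 6 0 isT.
Definition q1 : 'I_6 := @Ordinal 6 1 isT.
Definition q2 : 'I_6 := @Ordinal 6 2 isT.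
Definition q3 : 'I_6 := @Ordinal 6 3 isT.
Definition q4 : 'I_6 := @Ordinal 6 4 isT.
Definition q5 : 'I_6 := @Ordinal 6 5 isT.

Lemma sum6 (R : zmodType) (F : 'I_6 -> R) : \sum_(i < 6) F i =
  F q0 + F q1 + F q2 + F q3 + F q4 + F q5.
Proof.
rewrite !big_ord_recr big_ord0 /= add0r.
by repeat congr (_ + _); congr F; apply: val_inj.
Qed.

Definition w6 (g : 'I_6) : 'I_10 := widen_ord (isT : (6 <= 10)%N) g.

Lemma rdelta (F : fieldType) n (r : 'rV[F]_n) g : (r *m delta_mx g (0 : 'I_1)) 0 0 = r 0 g.
Proof.
rewrite mxE (bigD1 g) //= mxE !eqxx mulr1 big1 ?addr0 // => i ne.
by rewrite mxE (negbTE ne) mulr0.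
Qed.

Section Degenerate.
Variable R : realType.
Variable beta : nat -> nat -> R.
Local Notation M := (M3 beta).
Variable s : seq (R * R).
Hypothesis ss : size s = 7%N.
Hypothesis Vs : forall w, (forall f, M *m f = 0 -> peval f w = 0) -> w \in s.
Hypothesis sV : forall w, w \in s -> forall f, M *m f = 0 -> peval f w = 0.
Hypothesis WC : forall f, (forall w, w \in s -> peval f w = 0) -> M *m f = 0.
Hypothesis inj2 : forall f : 'cV[R]_10, f o6 0 = 0 -> f o7 0 = 0 -> f o8 0 = 0 ->
  f o9 0 = 0 -> M *m f = 0 -> f = 0.
Variables P1 P2 P3 : 'cV[R]_10.
Variables A B C : R.
Hypothesis P1t : [/\ P1 o6 0 = 1, P1 o7 0 = A, P1 o8 0 = 0 & P1 o9 0 = 0].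
Hypothesis P2t : [/\ P2 o6 0 = 0, P2 o7 0 = B, P2 o8 0 = 1 & P2 o9 0 = 0].
Hypothesis P3t : [/\ P3 o6 0 = 0, P3 o7 0 = C, P3 o8 0 = 0 & P3 o9 0 = 1].
Hypothesis Kspan : forall f, M *m f = 0 -> f = f o6 0 *: P1 + f o8 0 *: P2 + f o9 0 *: P3.
Hypothesis dg1 : 1 - A * B = 0.
Hypothesis dg2 : B + A * C = 0.

Let z (k : 'I_7) := nth 0 s k.
Let t := - B.

Definition rq : 'rV[R]_10 := \row_g (if (g == 6 :> nat) then 1 else if (g == 7 :> nat) then t
   else if (g == 8 :> nat) then t ^+ 2 else if (g == 9 :> nat) then t ^+ 3 else 0).

Definition eqv (f : 'cV[R]_10) := (rq *m f) 0 0.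

Lemma eqv_sum f : eqv f = f o6 0 + t * f o7 0 + t ^+ 2 * f o8 0 + t ^+ 3 * f o9 0.
Proof. rewrite /eqv mxE sum10 !mxE /=; ring. Qed.

Lemma eqv_lin k f g : eqv (k *: f + g) = k * eqv f + eqv g.
Proof. by rewrite /eqv mulmxDr -scalemxAr !mxE. Qed.

Lemma eqv_K f : M *m f = 0 -> eqv f = 0.
Proof.
move=> /Kspan ->.
case: P1t => p16 p17 p18 p19; case: P2t => p26 p27 p28 p29; case: P3t => p36 p37 p38 p39.
rewrite eqv_sum !mxE p16 p17 p18 p19 p26 p27 p28 p29 p36 p37 p38 p39 /t.
transitivity (f o6 0 * (1 - A * B) - f o9 0 * B * (C * (1 - A * B) + B * (B + A * C))).
  ring.
by rewrite dg1 dg2; ring.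
Qed.

Lemma z_in k : z k \in s.
Proof. by rewrite /z mem_nth // ss. Qed.

Definition E : 'M[R]_(7,10) :=
  \matrix_(k, g) ((z k).1 ^+ (mono g).1 * (z k).2 ^+ (mono g).2).

Lemma E_peval (f : 'cV[R]_10) k : (E *m f) k 0 = peval f (z k).
Proof. rewrite mxE /peval; apply: eq_bigr => g _; rewrite mxE; ring. Qed.

Lemma all_z w : w \in s -> exists k : 'I_7, w = z k.
Proof.
move=> ws; have hi : (index w s < 7)%N by rewrite -ss index_mem.
by exists (Ordinal hi); rewrite /z /= nth_index.
Qed.

Lemma Ef0_K (f : 'cV[R]_10) : E *m f = 0 -> M *m f = 0.
Proof.
move=> Ef; apply: WC => w /all_z [k ->].
by rewrite -E_peval Ef (_ : (0 : 'cV[R]_7) k 0 = 0) // mxE.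
Qed.

Lemma lam_ex : exists l : 'rV[R]_7, forall f, eqv f = \sum_k l 0 k * peval f (z k).
Proof.
have [l el] : exists l : 'rV[R]_7, rq = l *m E.
  apply: row_in_span => f Ef; apply/matrixP => i j; rewrite !ord1 [RHS]mxE.
  exact: (eqv_K (Ef0_K Ef)).
exists l => f; rewrite /eqv el -mulmxA mxE; apply: eq_bigr => k _.
by rewrite E_peval.
Qed.

Definition E2 : 'M[R]_(7,6) := \matrix_(k, g) E k (w6 g).

Lemma E2_inj (c : 'cV[R]_6) : E2 *m c = 0 -> c = 0.
Proof.
move=> Ec.
pose f : 'cV[R]_10 := \col_g (if (g == 0 :> nat) then c q0 0 else if (g == 1 :> nat) then c q1 0
  else if (g == 2 :> nat) then c q2 0 else if (g == 3 :> nat) then c q3 0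
  else if (g == 4 :> nat) then c q4 0 else if (g == 5 :> nat) then c q5 0 else 0).
have Ef : E *m f = 0.
  apply/matrixP => k j; rewrite ord1 [RHS]mxE.
  have Ec' : \sum_(q<6) E k (w6 q) * c q 0 = 0.
    have := congr1 (fun m : 'cV[R]_7 => m k 0) Ec; rewrite !mxE => h.
    rewrite -[X in _ = X]h.
    by apply: eq_bigr => q _; rewrite [E2 _ _]mxE.
  transitivity (\sum_(q<6) E k (w6 q) * c q 0); last exact: Ec'.
  rewrite mxE sum10 sum6 !mxE /w6 /=.
  ring.
have f0 := inj2 (f := f).
have : f = 0 by apply: f0; rewrite ?mxE //; apply: Ef0_K.
move=> /matrixP F0; apply/matrixP => i j; rewrite ord1.
have := ltn_ord i; case: i => [[|[|[|[|[|[|//]]]]]] ?] _.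
- by have := F0 o0 0; rewrite !mxE /= => <-; congr (c _ _); apply: val_inj.
- by have := F0 o1 0; rewrite !mxE /= => <-; congr (c _ _); apply: val_inj.
- by have := F0 o2 0; rewrite !mxE /= => <-; congr (c _ _); apply: val_inj.
- by have := F0 o3 0; rewrite !mxE /= => <-; congr (c _ _); apply: val_inj.
- by have := F0 o4 0; rewrite !mxE /= => <-; congr (c _ _); apply: val_inj.
- by have := F0 o5 0; rewrite !mxE /= => <-; congr (c _ _); apply: val_inj.
Qed.

Lemma peval_add (b1 b2 : 'cV[R]_10) w : peval (b1 + b2) w = peval b1 w + peval b2 w.
Proof. by rewrite /peval -big_split; apply: eq_bigr => g _ /=; rewrite !mxE; ring. Qed.

Lemma peval_scale k (b : 'cV[R]_10) w : peval (k *: b) w = k * peval b w.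
Proof. by rewrite /peval mulr_sumr; apply: eq_bigr => g _; rewrite !mxE; ring. Qed.

Lemma eqv_add (b1 b2 : 'cV[R]_10) : eqv (b1 + b2) = eqv b1 + eqv b2.
Proof. by rewrite /eqv mulmxDr mxE. Qed.

Lemma eqv_scale k (b : 'cV[R]_10) : eqv (k *: b) = k * eqv b.
Proof. by rewrite /eqv -scalemxAr mxE. Qed.

Lemma eqv_delta g : eqv (delta_mx g (0 : 'I_1)) =
  if ((mono g).1 + (mono g).2 == 3)%N then t ^+ (mono g).2 else 0.
Proof.
rewrite /eqv rdelta mxE.
by case: g => [[|[|[|[|[|[|[|[|[|[|//]]]]]]]]]] ?] /=; rewrite ?expr1.
Qed.

Lemma Gexp (f : 'cV[R]_10) (k x : R) :
  peval f (x, k + t * x) =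
  (f o0 0 + f o2 0 * k + f o5 0 * k ^+ 2 + f o9 0 * k ^+ 3) +
  (f o1 0 + f o2 0 * t + f o4 0 * k + 2 * f o5 0 * k * t + f o8 0 * k ^+ 2 + 3 * f o9 0 * k ^+ 2 * t) * x +
  (f o3 0 + f o4 0 * t + f o5 0 * t ^+ 2 + f o7 0 * k + 2 * f o8 0 * k * t + 3 * f o9 0 * k * t ^+ 2) * x ^+ 2 +
  (f o6 0 + f o7 0 * t + f o8 0 * t ^+ 2 + f o9 0 * t ^+ 3) * x ^+ 3.
Proof. rewrite /peval sum10 /=; ring. Qed.

Theorem degen_false : False.
Proof.
have [l hl] := lam_ex.
set d := fun g : 'I_10 => (delta_mx g (0 : 'I_1) : 'cV[R]_10).
have l0 : l != 0.
  apply/eqP => l0; have := hl (d o6); rewrite /d eqv_delta /= l0.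
  rewrite big1 => [|k _]; last by rewrite mxE mul0r.
  by move/eqP; rewrite oner_eq0.
have rE2 : \rank E2 = 6%N by apply: rank_full_col; exact: E2_inj.
have rK : \rank (kermx E2) = 1%N by rewrite mxrank_ker rE2.
have lK : (l <= kermx E2)%MS.
  apply/sub_kermxP/matrixP => i g; rewrite ord1 !mxE.
  have := hl (d (w6 g)); rewrite /d eqv_delta.
  have -> : ((mono (w6 g)).1 + (mono (w6 g)).2 == 3)%N = false.
    by case: g => [[|[|[|[|[|[|//]]]]]] ?].
  move=> /= h; rewrite [RHS]h; apply: eq_bigr => k _.
  by rewrite peval_delta !mxE mulrC.
pose mu : 'rV[R]_7 := \row_k (l 0 k * ((z k).2 - t * (z k).1)).
have muK : (mu <= kermx E2)%MS.
  apply/sub_kermxP/matrixP => i g; rewrite ord1 !mxE.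
  have hg : ((mono (w6 g)).1 + (mono (w6 g)).2 <= 2)%N by case: g => [[|[|[|[|[|[|//]]]]]] ?].
  set i0 := (mono (w6 g)).1 in hg *; set j0 := (mono (w6 g)).2 in hg *.
  have [g1 e1] : exists g1, mono g1 = (i0.+1, j0) by apply: mono_surj; lia.
  have [g2 e2] : exists g2, mono g2 = (i0, j0.+1) by apply: mono_surj; lia.
  have := hl ((- t) *: d g1 + d g2).
  rewrite eqv_add eqv_scale /d !eqv_delta e1 e2 /=.
  have -> : (((i0.+1 + j0 == 3)%N) = (i0 + j0.+1 == 3)%N) by rewrite addnS addSn.
  rewrite (_ : - t * (if (i0 + j0.+1 == 3)%N then t ^+ j0 else 0) +
     (if (i0 + j0.+1 == 3)%N then t ^+ j0.+1 else 0) = 0); last by case: ifP => _; rewrite ?exprS; ring.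
  move=> h; rewrite [RHS]h; apply: eq_bigr => k _.
  rewrite !mxE peval_add peval_scale !peval_delta e1 e2 /= /i0 /j0 !exprS; ring.
have [kap ekap] := rank1_prop rK lK muK l0.
have online k : l 0 k != 0 -> z k = ((z k).1, kap + t * (z k).1).
  move=> lk; have := congr1 (fun m : 'rV[R]_7 => m 0 k) ekap; rewrite !mxE => e.
  have : (z k).2 - t * (z k).1 = kap.
    by apply: (mulfI lk); rewrite e mulrC.
  by move=> <-; rewrite [in LHS](surjective_pairing (z k)); congr pair; ring.
have wvan (h : 'cV[R]_10) : (forall k, l 0 k != 0 -> peval h (z k) = 0) -> eqv h = 0.
  move=> H; rewrite hl big1 // => k _.
  by case: (eqVneq (l 0 k) 0) => [->|/H ->]; rewrite ?mul0r ?mulr0.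
have line (f : 'cV[R]_10) u : M *m f = 0 -> peval f (u, kap + t * u) = 0.
  move=> Mf.
  have G3 : f o6 0 + f o7 0 * t + f o8 0 * t ^+ 2 + f o9 0 * t ^+ 3 = 0.
    by rewrite -(eqv_K Mf) eqv_sum; ring.
  set G0 := (f o0 0 + f o2 0 * kap + f o5 0 * kap ^+ 2 + f o9 0 * kap ^+ 3).
  set G1 := (f o1 0 + f o2 0 * t + f o4 0 * kap + 2 * f o5 0 * kap * t + f o8 0 * kap ^+ 2 + 3 * f o9 0 * kap ^+ 2 * t).
  set G2 := (f o3 0 + f o4 0 * t + f o5 0 * t ^+ 2 + f o7 0 * kap + 2 * f o8 0 * kap * t + 3 * f o9 0 * kap * t ^+ 2).
  have fz k : l 0 k != 0 -> G0 + G1 * (z k).1 + G2 * (z k).1 ^+ 2 = 0.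
    move=> lk; have := sV (z_in k) Mf; rewrite (online k lk) Gexp G3 -/G0 -/G1 -/G2.
    by rewrite mul0r addr0.
  have eG2 : G2 = 0.
    have H : eqv (G0 *: d o1 + (G1 *: d o3 + G2 *: d o6)) = 0.
      apply: wvan => k lk; rewrite !peval_add !peval_scale !peval_delta /=.
      transitivity ((z k).1 * (G0 + G1 * (z k).1 + G2 * (z k).1 ^+ 2)); first ring.
      by rewrite fz // mulr0.
    by move: H; rewrite !eqv_add !eqv_scale /d !eqv_delta /= => H; rewrite -H; ring.
  have eG1 : G1 = 0.
    have H : eqv (G0 *: d o3 + G1 *: d o6) = 0.
      apply: wvan => k lk; rewrite !peval_add !peval_scale !peval_delta /=.
      transitivity ((z k).1 ^+ 2 * (G0 + G1 * (z k).1 + G2 * (z k).1 ^+ 2)); first by rewrite eG2; ring.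
      by rewrite fz // mulr0.
    by move: H; rewrite !eqv_add !eqv_scale /d !eqv_delta /= => H; rewrite -H; ring.
  have eG0 : G0 = 0.
    have H : eqv (G0 *: d o6) = 0.
      apply: wvan => k lk; rewrite !peval_scale !peval_delta /=.
      transitivity ((z k).1 ^+ 3 * (G0 + G1 * (z k).1 + G2 * (z k).1 ^+ 2)); first by rewrite eG2 eG1; ring.
      by rewrite fz // mulr0.
    by move: H; rewrite !eqv_scale /d !eqv_delta /= => H; rewrite -H; ring.
  by rewrite Gexp G3 -/G0 -/G1 -/G2 eG0 eG1 eG2; ring.
pose W := [seq ((n%:R : R), kap + t * n%:R) | n <- iota 0 8].
have uW : uniq W.
  rewrite map_inj_uniq ?iota_uniq // => n m /(congr1 fst) /= /eqP.
  by rewrite eqr_nat => /eqP.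
have sW : {subset W <= s}.
  move=> w /mapP [n _ ->]; apply: Vs => f Mf; exact: line.
have := uniq_leq_size uW sW; rewrite size_map size_iota ss.
by [].
Qed.

End Degenerate.

Definition p0 : 'I_7 := @Ordinal 7 0 isT.
Definition p1 : 'I_7 := @Ordinal 7 1 isT.
Definition p2 : 'I_7 := @Ordinal 7 2 isT.
Definition p3 : 'I_7 := @Ordinal 7 3 isT.
Definition p4 : 'I_7 := @Ordinal 7 4 isT.
Definition p5 : 'I_7 := @Ordinal 7 5 isT.
Definition p6 : 'I_7 := @Ordinal 7 6 isT.

Lemma sum7 (R : zmodType) (F : 'I_7 -> R) : \sum_(i < 7) F i =
  F p0 + F p1 + F p2 + F p3 + F p4 + F p5 + F p6.
Proof.
rewrite !big_ord_recr big_ord0 /= add0r.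
by repeat congr (_ + _); congr F; apply: val_inj.
Qed.

Lemma B2_idx_val k : (B2_idx k : nat) = nth 0%N B2_list k.
Proof. by rewrite /B2_idx inordK //; case: k => [[|[|[|[|[|[|[|//]]]]]]] ?]. Qed.

Lemma pickI (R : zmodType) n (a : 'I_n) (F : 'I_n -> R) :
  \sum_(g < n) (if a == g then F g else 0) = F a.
Proof.
rewrite (bigD1 a) //= eqxx big1 ?addr0 // => g /negbTE.
by rewrite eq_sym => ->.
Qed.

Lemma ord10_cases (g : 'I_10) : g = o0 \/ g = o1 \/ g = o2 \/ g = o3 \/ g = o4 \/
  g = o5 \/ g = o6 \/ g = o7 \/ g = o8 \/ g = o9.
Proof.
case: g => [[|[|[|[|[|[|[|[|[|[|//]]]]]]]]]] H];
  [left|right;left|do 2 right;left|do 3 right;left|do 4 right;left|do 5 right;left|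
   do 6 right;left|do 7 right;left|do 8 right;left|do 9 right]; by apply: val_inj.
Qed.

Section B2.
Variable R : realType.
Variable beta : nat -> nat -> R.
Local Notation M := (M3 beta).

Definition liftB (v : 'cV[R]_7) : 'cV[R]_10 :=
  \col_g (\sum_(k < 7) if (nth 0%N B2_list k == g :> nat) then v k 0 else 0).

Lemma M_liftB v : M *m liftB v = colsub B2_idx M *m v.
Proof.
apply/matrixP => i j; rewrite ord1 [LHS]mxE [RHS]mxE.
under eq_bigr => g _ do rewrite [liftB v g 0]mxE mulr_sumr.
rewrite exchange_big /=; apply: eq_bigr => k _.
rewrite [colsub _ _ _ _]mxE -(pickI (B2_idx k) (fun g => M i g * v k 0)).
apply: eq_bigr => g _.
have -> : (B2_idx k == g) = (nth 0%N B2_list k == g :> nat) by rewrite -B2_idx_val.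
by case: ifP; rewrite ?mulr0.
Qed.

Lemma liftB_top v : [/\ liftB v o6 0 = 0, liftB v o7 0 = v p6 0, liftB v o8 0 = 0 & liftB v o9 0 = 0].
Proof. by rewrite !mxE !sum7 /=; split; ring. Qed.

Lemma B2_kernel : B2_basis beta -> exists (P1 P2 P3 : 'cV[R]_10) (A B C : R),
  [/\ [/\ P1 o6 0 = 1, P1 o7 0 = A, P1 o8 0 = 0 & P1 o9 0 = 0],
      [/\ P2 o6 0 = 0, P2 o7 0 = B, P2 o8 0 = 1 & P2 o9 0 = 0],
      [/\ P3 o6 0 = 0, P3 o7 0 = C, P3 o8 0 = 0 & P3 o9 0 = 1],
      [/\ M *m P1 = 0, M *m P2 = 0 & M *m P3 = 0] &
      forall f, M *m f = 0 -> f = f o6 0 *: P1 + f o8 0 *: P2 + f o9 0 *: P3].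
Proof.
rewrite /B2_basis /=; set Bm := colsub B2_idx M; move=> [fr sub].
have [D eD] := submxP sub.
have eM : M = Bm *m D^T by rewrite -[M]trmxK eD trmx_mul trmxK.
pose P (c : 'I_10) := (delta_mx c (0 : 'I_1) : 'cV[R]_10) - liftB (col c D^T).
have MP c : M *m P c = 0.
  rewrite mulmxBr M_liftB -colE {1}eM colE -mulmxA -colE.
  by rewrite subrr.
have Pe c (g : 'I_10) : (g != c) -> P c g 0 = - liftB (col c D^T) g 0.
  by move=> ne; rewrite !mxE (negbTE ne) /= sub0r.
have Pc c : P c c 0 = 1 - liftB (col c D^T) c 0.
  by rewrite !mxE !eqxx.
clearbody P.
case: (liftB_top (col o6 D^T)) => a6 b6 c6 d6.
case: (liftB_top (col o8 D^T)) => a8 b8 c8 d8.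
case: (liftB_top (col o9 D^T)) => a9 b9 c9 d9.
exists (P o6), (P o8), (P o9).
exists (- col o6 D^T p6 0), (- col o8 D^T p6 0), (- col o9 D^T p6 0).
split.
- by rewrite Pc Pe // Pe // Pe // a6 b6 c6 d6 ?subr0 ?oppr0.
- by rewrite Pc Pe // Pe // Pe // a8 b8 c8 d8 ?subr0 ?oppr0.
- by rewrite Pc Pe // Pe // Pe // a9 b9 c9 d9 ?subr0 ?oppr0.
- by split; apply: MP.
move=> f Mf.
set r := f - (f o6 0 *: P o6 + f o8 0 *: P o8 + f o9 0 *: P o9).
have Mr : M *m r = 0.
  by rewrite !mulmxBr !mulmxDr -!scalemxAr !MP Mf !scaler0 !addr0 subrr.
have r6 : r o6 0 = 0.
  rewrite !mxE /= Pc Pe // Pe // a6 a8 a9; ring.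
have r8 : r o8 0 = 0.
  rewrite !mxE /= Pc Pe // Pe // c6 c8 c9; ring.
have r9 : r o9 0 = 0.
  rewrite !mxE /= Pc Pe // Pe // d6 d8 d9; ring.
have er : f = r + (f o6 0 *: P o6 + f o8 0 *: P o8 + f o9 0 *: P o9) by rewrite /r subrK.
clearbody r.
pose v : 'cV[R]_7 := \col_k r (B2_idx k) 0.
have rv : r = liftB v.
  apply/matrixP => g j; rewrite ord1 [RHS]mxE sum7 /v !mxE.
  have e0 : B2_idx p0 = o0 by apply: val_inj; rewrite /= B2_idx_val.
  have e1 : B2_idx p1 = o1 by apply: val_inj; rewrite /= B2_idx_val.
  have e2 : B2_idx p2 = o2 by apply: val_inj; rewrite /= B2_idx_val.
  have e3 : B2_idx p3 = o3 by apply: val_inj; rewrite /= B2_idx_val.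
  have e4 : B2_idx p4 = o4 by apply: val_inj; rewrite /= B2_idx_val.
  have e5 : B2_idx p5 = o5 by apply: val_inj; rewrite /= B2_idx_val.
  have e6 : B2_idx p6 = o7 by apply: val_inj; rewrite /= B2_idx_val.
  rewrite e0 e1 e2 e3 e4 e5 e6.
  by case: (ord10_cases g) => [->|[->|[->|[->|[->|[->|[->|[->|[->|->]]]]]]]]] /=;
    rewrite ?r6 ?r8 ?r9; ring.
have v0 : v = 0.
  have : colsub B2_idx M *m v = 0 by rewrite -M_liftB -rv.
  move=> h; apply: trmx_inj; rewrite trmx0.
  apply: (row_free_inj fr); rewrite /= mul0mx -trmx_mul h trmx0 //.
have r0 : r = 0 by rewrite rv v0; apply/matrixP => i j; rewrite !mxE big1 // => k _; rewrite mxE if_same.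
by rewrite [LHS]er r0 add0r.
Qed.

End B2.

Lemma split_mono (i j : nat) : (i + j <= 6)%N ->
  exists a b : 'I_10, ((mono a).1 + (mono b).1 = i)%N /\ ((mono a).2 + (mono b).2 = j)%N.
Proof.
move=> h.
have [hi|hi] := leqP 3 i.
  have [a ea] := @mono_surj 3 0 isT.
  have [b eb] := @mono_surj (i - 3) j ltac:(lia).
  by exists a, b; rewrite ea eb /=; split; lia.
have [hij|hij] := leqP (i + j) 3.
  have [a ea] := @mono_surj i j hij.
  have [b eb] := @mono_surj 0 0 isT.
  by exists a, b; rewrite ea eb /=; split; lia.
have [a ea] := @mono_surj i (3 - i) ltac:(lia).
have [b eb] := @mono_surj 0 (j - (3 - i)) ltac:(lia).
by exists a, b; rewrite ea eb /=; split; lia.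
Qed.

Lemma w6q : (w6 q0 = o0 /\ w6 q1 = o1 /\ w6 q2 = o2) /\ (w6 q3 = o3 /\ w6 q4 = o4 /\ w6 q5 = o5).
Proof. by do !split; apply: val_inj. Qed.

Section Assemble.
Variable R : realType.
Variable beta : nat -> nat -> R.
Local Notation M := (M3 beta).
Hypothesis Msym : M^T = M.
Hypothesis Mpsd : forall v : 'cV[R]_10, 0 <= (v^T *m M *m v) 0 0.
Hypothesis M2pd : forall v : 'cV[R]_6, v != 0 -> 0 < (v^T *m M2 beta *m v) 0 0.
Hypothesis rk : \rank M = 7%N.
Variable s : seq (R * R).
Hypothesis ss : size s = 7%N.
Hypothesis Viff : forall w, variety beta w <-> w \in s.
Hypothesis B2b : B2_basis beta.
Hypothesis WCh : weakly_consistent beta.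

Let z (k : 'I_7) := nth 0 s k.

Lemma WC' (f : 'cV[R]_10) : (forall w, w \in s -> peval f w = 0) -> M *m f = 0.
Proof. by move=> H; apply: WCh => w /Viff; exact: H. Qed.

Lemma sV w : w \in s -> forall f, M *m f = 0 -> peval f w = 0.
Proof. by move=> /Viff H f Mf; apply: H. Qed.

Lemma Vs w : (forall f, M *m f = 0 -> peval f w = 0) -> w \in s.
Proof. by move=> H; apply/Viff => a; exact: H. Qed.

Lemma zin k : z k \in s.
Proof. by rewrite /z mem_nth // ss. Qed.

Lemma allz w : w \in s -> exists k : 'I_7, w = z k.
Proof.
move=> ws; have hi : (index w s < 7)%N by rewrite -ss index_mem.
by exists (Ordinal hi); rewrite /z /= nth_index.
Qed.

Lemma inj2 (f : 'cV[R]_10) : f o6 0 = 0 -> f o7 0 = 0 -> f o8 0 = 0 ->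
  f o9 0 = 0 -> M *m f = 0 -> f = 0.
Proof.
move=> f6 f7 f8 f9 Mf.
pose v : 'cV[R]_6 := \col_i f (w6 i) 0.
have M2v : M2 beta *m v = 0.
  apply/matrixP => i j; rewrite ord1 [RHS]mxE.
  transitivity ((M *m f) (w6 i) 0); last by rewrite Mf mxE.
  case: w6q => [[e0 [e1 e2]] [e3 [e4 e5]]].
  rewrite [LHS]mxE sum6 [RHS]mxE sum10 !mxE /w6 /= f6 f7 f8 f9.
  rewrite -/(w6 q0) -/(w6 q1) -/(w6 q2) -/(w6 q3) -/(w6 q4) -/(w6 q5) e0 e1 e2 e3 e4 e5.
  ring.
have vv : (v^T *m M2 beta *m v) 0 0 = 0 by rewrite -mulmxA M2v mulmx0 mxE.
have v0 : v = 0.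
  by case: (eqVneq v 0) => // nz; have := M2pd nz; rewrite vv ltxx.
case: w6q => [[e0 [e1 e2]] [e3 [e4 e5]]].
have vz i : f (w6 i) 0 = 0 by have := congr1 (fun m : 'cV[R]_6 => m i 0) v0; rewrite !mxE.
apply/matrixP => g j; rewrite ord1 [RHS]mxE.
case: (ord10_cases g) => [->|[->|[->|[->|[->|[->|[->|[->|[->|->]]]]]]]]] //;
  [rewrite -e0|rewrite -e1|rewrite -e2|rewrite -e3|rewrite -e4|rewrite -e5]; exact: vz.
Qed.

Definition Ez : 'M[R]_(7,10) :=
  \matrix_(k, g) ((z k).1 ^+ (mono g).1 * (z k).2 ^+ (mono g).2).

Lemma Ez_peval (f : 'cV[R]_10) k : (Ez *m f) k 0 = peval f (z k).
Proof. rewrite mxE /peval; apply: eq_bigr => g _; rewrite mxE; ring. Qed.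

Lemma EK (f : 'cV[R]_10) : Ez *m f = 0 -> M *m f = 0.
Proof.
move=> Ef; apply: WC' => w /allz [k ->].
by rewrite -Ez_peval Ef mxE.
Qed.

Lemma EKX p (X : 'M[R]_(10, p)) : Ez *m X = 0 -> M *m X = 0.
Proof.
move=> EX; apply/matrixP => i j; rewrite mul_col_entry EK ?mxE //.
by rewrite colE mulmxA EX mul0mx.
Qed.

Lemma rankE : \rank Ez = 7%N.
Proof.
have sub : (M <= Ez)%MS.
  apply/row_subP => i.
  have H : forall f : 'cV[R]_10, Ez *m f = 0 -> row i M *m f = 0.
    by move=> f Ef; rewrite -row_mul EK // row0.
  have [l ->] := row_in_span H.
  exact: submxMl.
have := mxrankS sub; rewrite rk => h.
have := rank_leq_row Ez; lia.
Qed.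

Theorem algebraic_rep : exists w : 'I_7 -> R, (forall k, 0 <= w k) /\
  forall i j, (i + j <= 6)%N -> beta i j = \sum_k w k * ((z k).1 ^+ i * (z k).2 ^+ j).
Proof.
have [P1 [P2 [P3 [A [B [C [P1t P2t P3t [KP1 KP2 KP3] Kspan]]]]]]] := B2_kernel B2b.
have GoodAll : forall i j, (i + j <= 6)%N -> Good beta z (Xm i j).
  case: (boolP ((1 - A * B != 0) || (B + A * C != 0))) => [H|H].
    apply: (Good_generic P1t P2t P3t).
    - by case=> [|[|s']] /=.
    - by move=> s' k; apply: sV; [exact: zin| case: s' => [|[|s']]].
    - by case/orP: H; [left|right].
  exfalso; move: H; rewrite negb_or => /andP [/negPn/eqP dg1 /negPn/eqP dg2].
  exact: (degen_false ss Vs sV WC' inj2 P1t P2t P3t Kspan dg1 dg2).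
have rf : row_free Ez by rewrite /row_free rankE.
have [L eL] := row_freeP rf.
have ML : M = M *m L *m Ez.
  have : M *m (1%:M - L *m Ez) = 0.
    by apply: EKX; rewrite mulmxBr mulmx1 mulmxA eL mul1mx subrr.
  by rewrite mulmxBr mulmx1 mulmxA => /eqP; rewrite subr_eq0 => /eqP.
pose W := L^T *m M *m L.
have MW : M = Ez^T *m W *m Ez.
  have e1 : M = Ez^T *m L^T *m M.
    by rewrite -{1}Msym {1}ML !trmx_mul Msym mulmxA.
  rewrite /W; transitivity (Ez^T *m L^T *m (M *m L *m Ez)); first by rewrite -ML.
  by rewrite !mulmxA.
have Wdiag k m : k != m -> W k m = 0.
  move=> km.
  have eW : W k m = Lam beta (mulc (col m L) (col k L)).
    rewrite Lam_mulc /W -mulmxA mxE; apply: eq_bigr => g _.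
    by rewrite mul_col_entry [X in X * _ = _]mxE [X in _ = X * _]mxE.
  have [b [Lb Eb]] := Good_mulc (col m L) (col k L) GoodAll.
  have Mb : M *m b = 0.
    apply: WC' => w /allz [n ->]; rewrite -Eb evp_mulc.
    rewrite -!Ez_peval -!mul_col_entry eL !mxE.
    case: (eqVneq n m) => [enm|]; last by rewrite mul0r.
    by rewrite enm eq_sym (negbTE km) mulr0.
  by rewrite eW Lb Mb mxE.
have Wpsd k : 0 <= W k k.
  have := Mpsd (col k L); congr (_ <= _).
  rewrite /W !mxE; apply: eq_bigr => g _; rewrite !mxE; congr (_ * _).
  by apply: eq_bigr => h _; rewrite !mxE.
clearbody W.
exists (fun k => W k k); split => // i j hij.
have [a [b [ea eb]]] := split_mono hij.
have -> : beta i j = M a b by rewrite mxE ea eb.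
rewrite MW mxE; apply: eq_bigr => m _.
rewrite mxE (bigD1 m) //= big1 ?addr0; last by move=> k km; rewrite Wdiag ?mulr0.
rewrite !mxE -ea -eb !exprD; ring.
Qed.

End Assemble.

Section MeasureParts.
End MeasureParts.
Local Open Scope classical_set_scope.

Section Atomic.
Variable R : realType.
Variables (pts : 'I_7 -> (R * R)%type) (w : 'I_7 -> R).
Hypothesis w0 : forall k, 0 <= w k.

Definition wn (k : 'I_7) : {nonneg R} := NngNum (w0 k).

Definition mu_n (n : nat) : {measure set (R * R)%type -> \bar R} :=
  if insub n is Some k then mscale (wn k) \d_(pts k) else mzero.

Definition amu : {measure set (R * R)%type -> \bar R} := msum mu_n 7.

Lemma amu_ge0 (g : R * R -> \bar R) : measurable_fun setT g -> (forall x, (0 <= g x)%E) ->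
  (\int[amu]_x g x = \sum_(k < 7) (w k)%:E * g (pts k))%E.
Proof.
move=> mg g0.
rewrite ge0_integral_measure_sum //; apply: eq_bigr => k _.
rewrite /mu_n valK ge0_integral_mscale // integral_dirac // diracT mul1e //.
Qed.

Lemma amu_int (f : R * R -> R) : measurable_fun setT f ->
  amu.-integrable setT (fun x => (f x)%:E) /\ (\int[amu]_x (f x)%:E = (\sum_(k < 7) w k * f (pts k))%:E)%E.
Proof.
move=> mf.
have mf' : measurable_fun setT (fun x => (f x)%:E) by apply/measurable_EFinP.
split.
  apply/integrableP; split => //.
  rewrite amu_ge0 //; last exact: measurableT_comp.
  under eq_bigr do rewrite abse_EFin -EFinM.
  by rewrite sumEFin ltry.
have mp : measurable_fun setT (funepos (fun x => (f x)%:E)) by exact: measurable_funepos.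
have mn : measurable_fun setT (funeneg (fun x => (f x)%:E)) by exact: measurable_funeneg.
have p0 : forall x, (0 <= (funepos (fun x => (f x)%:E)) x)%E by move=> x; exact: funepos_ge0.
have n0 : forall x, (0 <= (funeneg (fun x => (f x)%:E)) x)%E by move=> x; exact: funeneg_ge0.
rewrite integralE (amu_ge0 mp p0) (amu_ge0 mn n0).
under eq_bigr do rewrite funeposE -EFin_max -EFinM.
under [X in (_ - X)%E]eq_bigr do rewrite funenegE -EFinN -EFin_max -EFinM.
rewrite !sumEFin -EFinB -sumrB; congr EFin; apply: eq_bigr => k _.
have [h|h] := leP 0 (f (pts k)).
  by rewrite max_r ?oppr_le0 //; ring.
by rewrite max_l ?oppr_ge0 ?(ltW h) //; ring.
Qed.

End Atomic.

Section Forward.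
Variable R : realType.
Variable beta : nat -> nat -> R.
Local Notation M := (M3 beta).
Variable mu : {measure set (R * R)%type -> \bar R}.
Hypothesis Hmu : forall i j : nat, (i + j <= 6)%N ->
      mu.-integrable setT (fun z : R * R => (z.1 ^+ i * z.2 ^+ j)%:E) /\
      (\int[mu]_z (z.1 ^+ i * z.2 ^+ j)%:E = (beta i j)%:E)%E.

Definition pm (a b : 'I_10) (z : R * R) : R :=
  z.1 ^+ ((mono a).1 + (mono b).1) * z.2 ^+ ((mono a).2 + (mono b).2).

Lemma pm_deg (a b : 'I_10) : ((mono a).1 + (mono b).1 + ((mono a).2 + (mono b).2) <= 6)%N.
Proof. by have := mono_deg a; have := mono_deg b; lia. Qed.

Lemma prod_expand (f g : 'cV[R]_10) z :
  peval f z * peval g z = \sum_(a < 10) \sum_(b < 10) (f a 0 * g b 0) * pm a b z.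
Proof.
rewrite /peval mulr_suml; apply: eq_bigr => a _; rewrite mulr_sumr; apply: eq_bigr => b _.
by rewrite /pm !exprD; ring.
Qed.

Lemma prod_int (f g : 'cV[R]_10) :
  mu.-integrable setT (fun z => (peval f z * peval g z)%:E) /\
  (\int[mu]_z (peval f z * peval g z)%:E =
   (\sum_(a < 10) \sum_(b < 10) f a 0 * g b 0 *
      beta ((mono a).1 + (mono b).1) ((mono a).2 + (mono b).2))%:E)%E.
Proof.
have e : (fun z => (peval f z * peval g z)%:E) =
    (fun z => \sum_(a < 10) \sum_(b < 10) ((f a 0 * g b 0)%:E * (pm a b z)%:E))%E.
  apply/funext => z; rewrite prod_expand -sumEFin; apply: eq_bigr => a _.
  by rewrite -sumEFin; apply: eq_bigr => b _; rewrite EFinM.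
have ib a b : mu.-integrable setT (fun z => (f a 0 * g b 0)%:E * (pm a b z)%:E)%E.
  apply: integrableZl => //; exact: (Hmu (pm_deg a b)).1.
have ia a : mu.-integrable setT (fun z => \sum_(b < 10) ((f a 0 * g b 0)%:E * (pm a b z)%:E))%E.
  by apply: integrable_sum => // b _; exact: ib.
rewrite e; split; first by apply: integrable_sum => // a _; exact: ia.
rewrite integral_sum //; rewrite -sumEFin; apply: eq_bigr => a _.
rewrite integral_sum //; rewrite -sumEFin; apply: eq_bigr => b _.
by rewrite integralZl //; [rewrite (Hmu (pm_deg a b)).2 EFinM | exact: (Hmu (pm_deg a b)).1].
Qed.

Lemma quad_M (f g : 'cV[R]_10) :
  \sum_(a < 10) \sum_(b < 10) f a 0 * g b 0 *
      beta ((mono a).1 + (mono b).1) ((mono a).2 + (mono b).2)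
  = \sum_(b < 10) g b 0 * (M *m f) b 0.
Proof.
rewrite exchange_big /=; apply: eq_bigr => b _; rewrite mxE mulr_sumr.
apply: eq_bigr => a _; rewrite mxE addnC [((mono a).2 + _)%N]addnC; ring.
Qed.

Lemma ker_ae (b : 'cV[R]_10) : M *m b = 0 -> \forall z \ae mu, peval b z = 0.
Proof.
move=> Mb.
have [ib eb] := prod_int b b.
have E0 : (\int[mu]_z `|(peval b z * peval b z)%:E| = 0)%E.
  transitivity (\int[mu]_z (peval b z * peval b z)%:E)%E.
    apply: eq_integral => z _; rewrite abse_EFin ger0_norm //.
    by rewrite -expr2 sqr_ge0.
  by rewrite eb quad_M Mb big1 // => k _; rewrite mxE mulr0.
have := (ae_eq_integral_abs mu measurableT (measurable_int mu ib)).1 E0.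
apply: filterS => z /(_ I) /= /eqP; rewrite eqe mulf_eq0 orbb => /eqP //.
Qed.

Lemma forward : B2_basis beta -> weakly_consistent beta.
Proof.
move=> B2b.
have [P1 [P2 [P3 [A [B [C [_ _ _ [KP1 KP2 KP3] Kspan]]]]]]] := B2_kernel B2b.
move=> a Ha; rewrite /pcols.
have aeV : \forall z \ae mu, peval a z = 0.
  move: (ker_ae KP1) (ker_ae KP2) (ker_ae KP3); apply: filterS3 => z h1 h2 h3.
  apply: Ha => f Mf; rewrite (Kspan f Mf) !peval_add !peval_scale h1 h2 h3; ring.
apply/matrixP => g j; rewrite ord1 [RHS]mxE.
have [ig eg] := prod_int a (delta_mx g 0).
have mi : measurable_fun setT (fun z => (peval a z * peval (delta_mx g 0) z)%:E).
  exact: measurable_int ig.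
have : (\int[mu]_z (peval a z * peval (delta_mx g 0) z)%:E = 0)%E.
  rewrite (ae_eq_integral (cst 0)) //; first exact: integral0.
  apply: filterS aeV => z az _; rewrite az mul0r.
  by [].
rewrite eg quad_M => /eqP; rewrite eqe => /eqP.
rewrite (bigD1 g) //= big1 ?addr0; last by move=> k kg; rewrite mxE (negbTE kg) mul0r.
by rewrite mxE !eqxx mul1r.
Qed.

End Forward.

Local Close Scope classical_set_scope.

Theorem theorem4p3 (R : realType) (beta : nat -> nat -> R) :
  psd_mx (M3 beta) ->
  pd_mx (M2 beta) ->
  \rank (M3 beta) = 7%N ->
  variety_card (variety beta) 7%N ->
  B2_basis beta ->
  (has_rep_measure beta <-> weakly_consistent beta).
Proof.
move=> [Msym Mpsd] [_ M2pd] rk [s [us ss Viff]] B2b; split.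
  by move=> [mu Hmu]; exact: forward Hmu B2b.
move=> WC.
have [w [w0 Hw]] := algebraic_rep Msym Mpsd M2pd rk ss Viff B2b WC.
exists (amu (fun k => nth 0 s k) w0) => i j hij.
have mf : measurable_fun setT (fun z : R * R => z.1 ^+ i * z.2 ^+ j).
  by apply: measurable_funM; apply: measurable_funX; [exact: measurable_fst | exact: measurable_snd].
have [I1 I2] := amu_int (fun k => nth 0 s k) w0 mf.
by split => //; rewrite I2 -Hw.
Qed.
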